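(* Let $U\subset\mathbb{R}^s$ be open, $X:U\to\mathbb{R}^{n+1}_1$ a spacelike embedding, $n^T$ a smooth future directed unit timelike normal field along $X$ and $n^S$ a smooth unit spacelike normal field along $X$ with $\langle n^S,n^T\rangle=0$. Write $\mathbb{LG}(n^T,n^S)(u)=n^T(u)+n^S(u)=(\ell_0(u),\ell_1(u),\dots,\ell_n(u))$ and $\widetilde{\mathbb{LG}}(n^T,n^S)=\mathbb{LG}(n^T,n^S)/\ell_0$. Then for each $i=1,\dots,s$, $$\pi^\tau\circ \widetilde{\mathbb{LG}}(n^T,n^S)_{u_i}=-\sum_{j=1}^s\frac{1}{\ell_0(u)}h_i^j(n^T,n^S)\,X_{u_j}.$$
   Context: $\mathbb{R}^{n+1}_1$ is $\mathbb{R}^{n+1}$ with $\langle x,y\rangle=-x_0y_0+\sum_{i=1}^n x_iy_i$. An embedding is spacelike if all its tangent spaces consist of spacelike vectors ($\langle v,v\rangle>0$). A normal vector at $p=X(u)$ is a vector in the pseudo-orthogonal complement $N_p(M)$ of $T_pM=\mathrm{span}\{X_{u_1},\dots,X_{u_s}\}$. Future directed unit timelike: $\langle n^T,n^T\rangle=-1$ and zeroth coordinate positive; unit spacelike: $\langle n^S,n^S\rangle=1$. $\pi^\tau:\mathbb{R}^{n+1}_1=T_pM\oplus N_p(M)\to T_pM$ is the projection. $g_{ij}=\langle X_{u_i},X_{u_j}\rangle$, $(g^{ij})=(g_{ij})^{-1}$, $h_{ij}(n^T,n^S)=\langle-(n^T+n^S)_{u_i},X_{u_j}\rangle$, and $h_i^j=\sum_m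 h_{im}g^{mj}$. (Note $\ell_0>0$ since $n^T+n^S$ is a nonzero lightlike vector.) *)

(* Defs.v *)
From HB Require Import structures.
From mathcomp Require Import all_boot all_order all_algebra.
From mathcomp Require Import all_classical all_reals all_analysis.
Set Implicit Arguments. Unset Strict Implicit. Unset Printing Implicit Defensive.
Import Order.TTheory GRing.Theory Num.Theory.
Import numFieldNormedType.Exports.
Local Open Scope ring_scope.
Local Open Scope classical_set_scope.

Section Defs.
Variable R : realType.

(* Minkowski (pseudo-)scalar product on R^{n+1}_1, vectors are 'rV_(n.+1),
   coordinate 0 is the time coordinate x_0. *)
Definition lor (n : nat) (x y : 'rV[R]_n.+1) : R :=
  - (x 0 ord0 * y 0 ord0) + \sum_(i < n) x 0 (lift ord0 i) * y 0 (lift ord0 i).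

Definition pderiv (s : nat) (V : normedModType R) (f : 'rV[R]_s -> V)
  (i : 'I_s) (u : 'rV[R]_s) : V := derive f u (delta_mx 0 i).

Fixpoint Ck (s : nat) (V : normedModType R) (k : nat) (U : set 'rV[R]_s)
  (f : 'rV[R]_s -> V) : Prop :=
  match k with
  | 0 => forall u, U u -> {for u, continuous f}
  | k'.+1 => (forall u, U u -> differentiable f u) /\
             forall i : 'I_s, Ck k' U (pderiv f i)
  end.

Definition smooth_on (s : nat) (V : normedModType R) (U : set 'rV[R]_s)
  (f : 'rV[R]_s -> V) : Prop := forall k, Ck k U f.

Definition jac (s n : nat) (X : 'rV[R]_s -> 'rV[R]_n.+1) (u : 'rV[R]_s)
  : 'M[R]_(s, n.+1) := \matrix_(i < s) pderiv X i u.

(* embedding: smooth immersion that is a homeomorphism onto its image *)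
Definition embedding (s n : nat) (U : set 'rV[R]_s)
  (X : 'rV[R]_s -> 'rV[R]_n.+1) : Prop :=
  [/\ smooth_on U X,
      (forall u, U u -> row_free (jac X u)),
      (forall u v, U u -> U v -> X u = X v -> u = v) &
      (forall u, U u -> forall e : R, 0 < e -> exists2 d : R, 0 < d &
          forall v, U v -> `|X v - X u| < d -> `|v - u| < e)].

Definition tangent (s n : nat) (X : 'rV[R]_s -> 'rV[R]_n.+1) (u : 'rV[R]_s)
  (w : 'rV[R]_n.+1) : Prop := exists c : 'rV[R]_s, w = c *m jac X u.

Definition normal (s n : nat) (X : 'rV[R]_s -> 'rV[R]_n.+1) (u : 'rV[R]_s)
  (w : 'rV[R]_n.+1) : Prop := forall i : 'I_s, lor w (pderiv X i u) = 0.

Definition spacelike_embedding (s n : nat) (U : set 'rV[R]_s)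
  (X : 'rV[R]_s -> 'rV[R]_n.+1) : Prop :=
  embedding U X /\
  forall u, U u -> forall w, tangent X u w -> w != 0 -> 0 < lor w w.

Definition pi_tau (s n : nat) (X : 'rV[R]_s -> 'rV[R]_n.+1) (u : 'rV[R]_s)
  (v : 'rV[R]_n.+1) : 'rV[R]_n.+1 :=
  xget 0 [set w | tangent X u w /\ normal X u (v - w)].

Definition gmat (s n : nat) (X : 'rV[R]_s -> 'rV[R]_n.+1) (u : 'rV[R]_s)
  : 'M[R]_s := \matrix_(i, j) lor (pderiv X i u) (pderiv X j u).

Definition hlow (s n : nat) (X nT nS : 'rV[R]_s -> 'rV[R]_n.+1)
  (u : 'rV[R]_s) (i j : 'I_s) : R :=
  lor (- pderiv (nT \+ nS) i u) (pderiv X j u).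

Definition hmix (s n : nat) (X nT nS : 'rV[R]_s -> 'rV[R]_n.+1)
  (u : 'rV[R]_s) (i j : 'I_s) : R :=
  \sum_(m < s) hlow X nT nS u i m * invmx (gmat X u) m j.

Definition LG (s n : nat) (nT nS : 'rV[R]_s -> 'rV[R]_n.+1) : 'rV[R]_s -> 'rV[R]_n.+1 :=
  fun u => nT u + nS u.
Definition ell0 (s n : nat) (nT nS : 'rV[R]_s -> 'rV[R]_n.+1) (u : 'rV[R]_s) : R :=
  LG nT nS u 0 ord0.
Definition LGt (s n : nat) (nT nS : 'rV[R]_s -> 'rV[R]_n.+1) : 'rV[R]_s -> 'rV[R]_n.+1 :=
  fun u => (ell0 nT nS u)^-1 *: LG nT nS u.

End Defs.

(* Main.v *)
Require Import Defs.
From HB Require Import structures.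
From mathcomp Require Import all_boot all_order all_algebra.
From mathcomp Require Import all_classical all_reals all_analysis.
From mathcomp Require Import lra.
Import Order.TTheory GRing.Theory Num.Theory.
Import numFieldNormedType.Exports.
Local Open Scope ring_scope.
Local Open Scope classical_set_scope.
Section Alg.
Variable R : realType.
Variable n : nat.
Implicit Types x y z : 'rV[R]_n.+1.

Lemma lorC x y : lor x y = lor y x.
Proof. by rewrite /lor mulrC; congr (_ + _); apply: eq_bigr => k _; rewrite mulrC. Qed.

Lemma lorDl x y z : lor (x + y) z = lor x z + lor y z.
Proof.
rewrite /lor !mxE mulrDl opprD -addrACA; congr (_ + _).
by rewrite -big_split; apply: eq_bigr => k _; rewrite !mxE mulrDl.
Qed.

Lemma lorZl (a : R) x z : lor (a *: x) z = a * lor x z.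
Proof.
rewrite /lor !mxE mulrDr mulrN mulrA mulr_sumr; congr (_ + _).
by apply: eq_bigr => k _; rewrite !mxE mulrA.
Qed.

Lemma lor0l z : lor 0 z = 0.
Proof. by rewrite -(scale0r (0 : 'rV[R]_n.+1)) lorZl mul0r. Qed.

Lemma lorNl x z : lor (- x) z = - lor x z.
Proof. by rewrite -scaleN1r lorZl mulN1r. Qed.

Lemma lorBl x y z : lor (x - y) z = lor x z - lor y z.
Proof. by rewrite lorDl lorNl. Qed.

Lemma lor_suml (I : finType) (F : I -> 'rV[R]_n.+1) z :
  lor (\sum_i F i) z = \sum_i lor (F i) z.
Proof. exact: (big_morph _ (fun x y => lorDl x y z) (lor0l z)). Qed.

Lemma lorDr x y z : lor z (x + y) = lor z x + lor z y.
Proof. by rewrite !(lorC z) lorDl. Qed.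
Lemma lorBr x y z : lor z (x - y) = lor z x - lor z y.
Proof. by rewrite !(lorC z) lorBl. Qed.
Lemma lorZr a x z : lor z (a *: x) = a * lor z x.
Proof. by rewrite !(lorC z) lorZl. Qed.

Variable s : nat.
Variable X : 'rV[R]_s -> 'rV[R]_n.+1.
Variable u : 'rV[R]_s.

Lemma cJE (c : 'rV[R]_s) : c *m jac X u = \sum_j c 0 j *: pderiv X j u.
Proof. by rewrite mulmx_sum_row; apply: eq_bigr => j _; rewrite rowK. Qed.

Lemma lor_cJ (c : 'rV[R]_s) k :
  lor (c *m jac X u) (pderiv X k u) = (c *m gmat X u) 0 k.
Proof.
rewrite cJE lor_suml !mxE; apply: eq_bigr => j _.
by rewrite lorZl mxE.
Qed.

Lemma lor_r_cJ y (c : 'rV[R]_s) :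
  lor y (c *m jac X u) = \sum_k c 0 k * lor y (pderiv X k u).
Proof. by rewrite lorC cJE lor_suml; apply: eq_bigr => k _; rewrite lorZl lorC. Qed.


Hypothesis Hsp : forall w, tangent X u w -> w != 0 -> 0 < lor w w.
Hypothesis Hrf : row_free (jac X u).

Lemma tan_norm0 w : tangent X u w -> normal X u w -> w = 0.
Proof.
move=> [c ->] Hn; apply/eqP; apply: contraT => Hw.
have := @Hsp (c *m jac X u) (ex_intro _ c erefl) Hw.
by rewrite lor_r_cJ big1 ?ltxx // => k _; rewrite Hn mulr0.
Qed.

Lemma g_unit : gmat X u \in unitmx.
Proof.
rewrite -row_free_unit; apply: inj_row_free => c Hc.
apply/eqP; rewrite -(mulmx_free_eq0 _ Hrf); apply/eqP.
apply: tan_norm0; first by exists c.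
by move=> k; rewrite lor_cJ Hc mxE.
Qed.

Lemma pi_tau_eq v w : tangent X u w -> normal X u (v - w) -> pi_tau X u v = w.
Proof.
move=> Ht Hn; apply: xget_unique; first by split.
move=> y [Hty Hny]; apply/eqP; rewrite -subr_eq0; apply/eqP.
apply: tan_norm0.
  by case: Hty => c1 -> ; case: Ht => c2 ->; exists (c1 - c2); rewrite mulmxBl.
move=> k; move: (Hn k) (Hny k).
have -> : y - w = (v - w) - (v - y). by rewrite opprB [RHS]addrC addrA subrK.
by move=> H1 H2; rewrite lorBl; apply/eqP; rewrite subr_eq0; apply/eqP; exact: (etrans H1 (esym H2)).
Qed.

Lemma main_alg (i : 'I_s) (a b : R) (Li Lu : 'rV[R]_n.+1) (h : 'I_s -> 'I_s -> R) :
  normal X u Lu ->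
  (forall k, h i k = lor (- Li) (pderiv X k u)) ->
  pi_tau X u (a *: Li + b *: Lu) =
  - \sum_(j < s) (a * (\sum_(m < s) h i m * invmx (gmat X u) m j)) *: pderiv X j u.
Proof.
move=> HLu Hh.
set c : 'rV[R]_s := (- a) *: (\row_m h i m *m invmx (gmat X u)).
have Hc : c *m jac X u =
  - \sum_(j < s) (a * (\sum_(m < s) h i m * invmx (gmat X u) m j)) *: pderiv X j u.
  rewrite cJE -sumrN; apply: eq_bigr => j _.
  rewrite -scaleNr /c !mxE; congr (_ *: _); rewrite mulNr; congr (- (_ * _)).
  by apply: eq_bigr => m _; rewrite mxE.
rewrite -Hc; apply: pi_tau_eq; first by exists c.
move=> k; rewrite lorBl lor_cJ /c -scalemxAl -mulmxA mulVmx ?g_unit // mulmx1.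
rewrite lorDl !lorZl HLu mulr0 addr0 !mxE Hh lorNl.
by rewrite mulrN mulNr opprK subrr.
Qed.

End Alg.

Lemma deriv_LGt (R : realType) (s n : nat) (nT nS : 'rV[R]_s -> 'rV[R]_n.+1) u e :
  differentiable nT u -> differentiable nS u -> ell0 nT nS u != 0 ->
  derive (LGt nT nS) u e =
  (ell0 nT nS u)^-1 *: derive (nT \+ nS) u e +
  derive (fun y => (ell0 nT nS y)^-1) u e *: LG nT nS u.
Proof.
move=> dT dS H0.
have dL : derivable (LG nT nS) u e.
  apply: (@derivableD _ _ _ nT nS); exact: diff_derivable.
have dLe := (derivable_mxP _ _ _).1 dL.
have dl : derivable (ell0 nT nS) u e by exact: dLe.
have dli : derivable (fun y => (ell0 nT nS y)^-1) u e by exact: derivableV.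
have Hf : forall a k, (fun y => LGt nT nS y a k) =
   (fun y => (ell0 nT nS y)^-1) * (fun y => LG nT nS y a k).
  by move=> a k; apply/funext => y /=; rewrite /LGt mxE.
have dG : derivable (LGt nT nS) u e.
  by apply/derivable_mxP => a k; rewrite Hf; apply: derivableM.
change (nT \+ nS) with (LG nT nS).
rewrite (derive_mx dG) (derive_mx dL); apply/matrixP => a k.
rewrite !mxE Hf deriveM //.
congr (_ + _); rewrite [RHS]mulrC /LG [in LHS]mxE; reflexivity.
Qed.

Lemma ell0_neq0 (R : realType) (n : nat) (a b : 'rV[R]_n.+1) :
  lor a a = -1 -> lor b b = 1 -> lor b a = 0 -> (a + b) 0 ord0 != 0.
Proof.
move=> Ha Hb Hba; apply/negP => /eqP H0.
have HL : lor (a + b) (a + b) = 0.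
  rewrite lorDl !lorDr Ha Hb Hba (@lorC _ _ a b) Hba; lra.
have HL0 : a + b = 0.
  move: HL; rewrite /lor H0 mulr0 oppr0 add0r => /psumr_eq0P Hs.
  apply/rowP => j; rewrite !mxE.
  case: (unliftP ord0 j) => [i ->|->].
    have Hp : forall k : 'I_n, true -> 0 <= (a + b) 0 (lift ord0 k) * (a + b) 0 (lift ord0 k).
      by move=> k _; rewrite -expr2 sqr_ge0.
    have := Hs Hp i isT; rewrite mxE => /eqP; rewrite mulf_eq0 orbb => /eqP.
    done.
  by move: H0; rewrite mxE.
have : b = - a by apply/eqP; rewrite -addr_eq0 addrC HL0.
move=> Eb; move: Hb; rewrite Eb lorNl lorC lorNl opprK Ha; lra.
Qed.

Theorem proposition3p3 (R : realType) (s n : nat) (U : set 'rV[R]_s)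
  (X nT nS : 'rV[R]_s -> 'rV[R]_n.+1) :
  open U ->
  spacelike_embedding U X ->
  smooth_on U nT -> smooth_on U nS ->
  (forall u, U u ->
     [/\ normal X u (nT u), lor (nT u) (nT u) = -1 & 0 < nT u 0 ord0] /\
     [/\ normal X u (nS u), lor (nS u) (nS u) = 1 &
         lor (nS u) (nT u) = 0]) ->
  forall u, U u -> forall i : 'I_s,
    pi_tau X u (pderiv (LGt nT nS) i u) =
    - \sum_(j < s) ((ell0 nT nS u)^-1 * hmix X nT nS u i j) *: pderiv X j u.
Proof.
move=> _ [[_ Hrf _ _] Hsp] HT HS Hn u Uu i.
have [[nTn HTT _] [nSn HSS HST]] := Hn u Uu.
have dT : differentiable nT u := (HT 1%N).1 u Uu.
have dS : differentiable nS u := (HS 1%N).1 u Uu.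
have H0 : ell0 nT nS u != 0 by exact: ell0_neq0.
rewrite /pderiv deriv_LGt //.
apply: (@main_alg R n s X u (Hsp u Uu) (Hrf u Uu) i _ _ _ _ (hlow X nT nS u)).
  by move=> k; rewrite /LG lorDl nTn nSn addr0.
by [].
Qed.
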